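(* Let $1<p<\infty$ and let $a=\{a_k\}_{k\in\mathbb Z}$ be any sequence of complex numbers. Then $$A_p(a):=\Big(\sum_{k=0}^\infty\Big(2^{k/p'}\sup_{r\in\mathbb N_0}\min(1,2^{r-k})\,\widehat a_{2^r}\Big)^p\Big)^{1/p}\lesssim\Big(\sum_{k\in\mathbb Z}(|k|+1)^{p-2}|a_k|^p\Big)^{1/p},$$ with a constant depending only on $p$.
   Context: $p'=p/(p-1)$. For $r\ge0$, $\widehat a_{2^r}=\sup_{2^r\le|m|<2^{r+1}}\frac1{|m|+1}\big|\sum_{j=0}^m a_j\big|$, where for $m<0$ the sum $\sum_{j=0}^ma_j$ means $\sum_{j=m}^0a_j$. *)

(* Defs.v *)
From HB Require Import structures.
From mathcomp Require Import all_boot all_order all_algebra.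
From mathcomp Require Import all_classical all_reals all_analysis.
From mathcomp Require Import complex.
Set Implicit Arguments. Unset Strict Implicit. Unset Printing Implicit Defensive.
Import Order.TTheory GRing.Theory Num.Theory.
Local Open Scope ring_scope.

Definition cabs (R : realType) (z : R[i]) : R := Normc.normc z.

(* partial sum  \sum_{j=0}^m a_j  for m >= 0, and  \sum_{j=m}^0 a_j  for m < 0 *)
Definition psum (R : realType) (a : int -> R[i]) (m : int) : R[i] :=
  match m with
  | Posz n => \sum_(0 <= j < n.+1) a (Posz j)
  | Negz n => \sum_(0 <= j < n.+2) a (- (Posz j))
  end.

(* hat a_{2^r} = sup_{2^r <= |m| < 2^{r+1}} |sum_{j=0}^m a_j| / (|m|+1),
   as an extended real (a supremum over a finite nonempty set). *)
Definition ahat (R : realType) (a : int -> R[i]) (r : nat) : \bar R :=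
  ereal_sup [set ((cabs (psum a m)) / ((`|m|%N)%:R + 1))%:E
             | m in [set m : int | (2 ^ r <= `|m|)%N && (`|m| < 2 ^ r.+1)%N]].

Definition Ap (R : realType) (p : R) (a : int -> R[i]) : \bar R :=
  let p' := p / (p - 1) in
  ((\sum_(0 <= k <oo)
      poweR (((2 : R) `^ (k%:R / p'))%:E *
             ereal_sup [set (Num.min 1 ((2 : R) `^ (r%:R - k%:R)))%:E * ahat a r
                       | r in [set: nat]]) p)
   `^ (p^-1))%E.

Definition RHSp (R : realType) (p : R) (a : int -> R[i]) : \bar R :=
  ((\esum_(k in [set: int])
      ((((`|k|%N)%:R + 1) `^ (p - 2)) * (cabs (a k)) `^ p)%:E) `^ (p^-1))%E.

(* Main.v *)
Require Import Defs.
From HB Require Import structures.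
From mathcomp Require Import all_boot all_order all_algebra.
From mathcomp Require Import all_classical all_reals all_analysis.
From mathcomp Require Import complex.
From mathcomp Require Import ring lra zify.
Import Order.TTheory GRing.Theory Num.Theory.
Local Open Scope ring_scope.

Section Fin.
Variable R : realType.

Lemma holder_fin (p q : R) (f g : nat -> R) n :
  0 < p -> 0 < q -> p^-1 + q^-1 = 1 ->
  (forall i, 0 <= f i) -> (forall i, 0 <= g i) ->
  \sum_(i < n) f i * g i <=
  (\sum_(i < n) f i `^ p) `^ p^-1 * (\sum_(i < n) g i `^ q) `^ q^-1.
Proof.
move=> p0 q0 pq f0 g0; elim: n => [|n IH].
  by rewrite !big_ord0 mulr_ge0 // powR_ge0.
rewrite !big_ord_recr /=.
set S := \sum_(i < n) f i `^ p; set W := \sum_(i < n) g i `^ q.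
have S0 : 0 <= S by apply: sumr_ge0 => i _; exact: powR_ge0.
have W0 : 0 <= W by apply: sumr_ge0 => i _; exact: powR_ge0.
apply: le_trans (lerD IH (lexx _)) _.
have := @hoelder2 R (S `^ p^-1) (f n) (W `^ q^-1) (g n) p q
  (powR_ge0 _ _) (f0 n) (powR_ge0 _ _) (g0 n) p0 q0 pq.
by rewrite -!powRrM !mulVf ?gt_eqF // !powRr1.
Qed.

Lemma jensen_fin (p : R) (w y : nat -> R) n : 1 < p ->
  (forall i, 0 <= w i) -> (forall i, 0 <= y i) ->
  (\sum_(i < n) w i * y i) `^ p <=
  (\sum_(i < n) w i) `^ (p - 1) * \sum_(i < n) w i * y i `^ p.
Proof.
move=> p1 w0 y0.
have p0 : 0 < p by apply: lt_trans p1.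
set q := p / (p - 1).
have pm1 : 0 < p - 1 by rewrite subr_gt0.
have q0 : 0 < q by rewrite divr_gt0.
have qi : q^-1 = 1 - p^-1.
  by rewrite /q invf_div; field; rewrite gt_eqF.
have pq : p^-1 + q^-1 = 1 by rewrite qi addrC subrK.
have := @holder_fin p q (fun i => w i `^ p^-1 * y i) (fun i => w i `^ q^-1) n
  p0 q0 pq (fun i => mulr_ge0 (powR_ge0 _ _) (y0 i)) (fun i => powR_ge0 _ _).
have E1 i : w i `^ p^-1 * y i * w i `^ q^-1 = w i * y i.
  rewrite mulrAC -powRD; last by rewrite pq oner_eq0.
  by rewrite pq powRr1.
have E2 i : (w i `^ p^-1 * y i) `^ p = w i * y i `^ p.
  by rewrite powRM ?powR_ge0 // -powRrM mulVf ?gt_eqF // powRr1.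
have E3 i : (w i `^ q^-1) `^ q = w i.
  by rewrite -powRrM mulVf ?gt_eqF // powRr1.
under eq_bigr do rewrite E1.
under [X in X `^ p^-1 * _]eq_bigr do rewrite E2.
under [X in _ * X `^ q^-1]eq_bigr do rewrite E3.
move=> H.
have S0 : 0 <= \sum_(i < n) w i * y i by apply: sumr_ge0 => i _; exact: mulr_ge0.
have T0 : 0 <= \sum_(i < n) w i * y i `^ p.
  by apply: sumr_ge0 => i _; rewrite mulr_ge0 // powR_ge0.
have W0 : 0 <= \sum_(i < n) w i by apply: sumr_ge0.
have := ge0_ler_powR (ltW p0) _ _ H.
rewrite !nnegrE S0 mulr_ge0 ?powR_ge0 // => /(_ isT isT).
rewrite powRM ?powR_ge0 // -!powRrM mulVf ?gt_eqF // powRr1 //.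
have -> : q^-1 * p = p - 1 by rewrite qi mulrBl mul1r mulVf ?gt_eqF.
by rewrite mulrC.
Qed.

Lemma schur_fin (p : R) (K : nat -> nat -> R) (x : nat -> R) M L A B :
  1 < p -> (forall k s, 0 <= K k s) -> (forall s, 0 <= x s) -> 0 <= A ->
  (forall k, (k < M)%N -> \sum_(s < L) K k s <= A) ->
  (forall s, (s < L)%N -> \sum_(k < M) K k s <= B) ->
  \sum_(k < M) (\sum_(s < L) K k s * x s) `^ p <=
  A `^ (p - 1) * B * \sum_(s < L) x s `^ p.
Proof.
move=> p1 K0 x0 A0 HA HB.
have pm1 : 0 <= p - 1 by rewrite subr_ge0 ltW.
apply: (@le_trans _ _ (\sum_(k < M) A `^ (p - 1) * \sum_(s < L) K k s * x s `^ p)).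
  apply: ler_sum => k _.
  have J := @jensen_fin p (K k) x L p1 (K0 k) x0.
  apply: le_trans J _.
  apply: ler_wpM2r; first by apply: sumr_ge0 => s _; rewrite mulr_ge0 ?powR_ge0.
  apply: ge0_ler_powR => //; rewrite ?nnegrE //; first by apply: sumr_ge0.
  exact: HA.
rewrite -mulr_sumr -mulrA; apply: ler_wpM2l; first exact: powR_ge0.
rewrite exchange_big /= mulr_sumr; apply: ler_sum => s _.
rewrite -mulr_suml; apply: ler_wpM2r; first exact: powR_ge0.
exact: HB.
Qed.

End Fin.

Section Blk.
Variable R : realType.

Lemma geo_le (r : R) n : 0 <= r < 1 -> \sum_(i < n) r ^+ i <= (1 - r)^-1.
Proof.
case/andP=> r0 r1.
have r1' : 0 < 1 - r by rewrite subr_gt0.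
have E : \sum_(i < n) r ^+ i * (1 - r) = 1 - r ^+ n.
  elim: n => [|n IH]; first by rewrite big_ord0 expr0 subrr.
  by rewrite big_ord_recr /= IH exprS; ring.
rewrite -(ler_pM2r r1') mulVf ?gt_eqF // mulr_suml E.
by rewrite gerBl exprn_ge0.
Qed.

Lemma geo_le2 (r : R) c M : 0 <= r < 1 ->
  \sum_(k < M) (if (c <= k)%N then r ^+ (k - c) else 0) <= (1 - r)^-1.
Proof.
move=> hr.
suff -> : \sum_(k < M) (if (c <= k)%N then r ^+ (k - c) else 0) =
          \sum_(i < M - c) r ^+ i by exact: geo_le.
elim: M => [|M IH]; first by rewrite !big_ord0.
rewrite big_ord_recr /= IH.
case: leqP => cM.
  by rewrite subSn // big_ord_recr.
rewrite addr0; have -> : (M.+1 - c = M - c)%N by lia.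
by [].
Qed.

Lemma geo_le3 (r : R) c L : 0 <= r < 1 ->
  \sum_(s < L) (if (s <= c)%N then r ^+ (c - s) else 0) <= (1 - r)^-1.
Proof.
move=> hr; apply: le_trans (geo_le r c.+1 hr).
case/andP: hr => r0 r1.
elim: L c => [|L IH] c.
  by rewrite big_ord0 sumr_ge0 // => i _; rewrite exprn_ge0.
rewrite big_ord_recl /=.
case: c => [|c].
  rewrite big1 ?addr0; last by move=> i _.
  by rewrite big_ord_recl big_ord0 addr0.
rewrite subn0 [X in _ <= X]big_ord_recr /= addrC.
rewrite lerD2l.
apply: (le_trans _ (IH c)); apply: ler_sum => i _.
by rewrite /bump /= !add1n ltnS subSS.
Qed.

Lemma dyadic (f : nat -> R) n :
  \sum_(s < n) \sum_(2 ^ s <= i < 2 ^ s.+1) f i = \sum_(1 <= i < 2 ^ n) f i.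
Proof.
elim: n => [|n IH]; first by rewrite big_ord0 big_geq.
rewrite big_ord_recr /= IH -big_cat_nat //; first by rewrite expn_gt0.
by rewrite leq_exp2l.
Qed.

End Blk.


Definition Dblk (R : realType) (b : nat -> R) s :=
  \sum_(2 ^ s <= i < 2 ^ s.+1) b i.-1.
Definition Wblk (R : realType) (p : R) (b : nat -> R) s :=
  \sum_(2 ^ s <= i < 2 ^ s.+1) i%:R `^ (p - 2) * b i.-1 `^ p.
Definition Tsum (R : realType) (b : nat -> R) r :=
  \sum_(0 <= j < 2 ^ r.+1) b j.

Arguments Dblk {R}. Arguments Wblk {R}. Arguments Tsum {R}.
Section Blk2.
Variable R : realType.
Variable p : R.
Hypothesis hp : 1 < p.
Variable b : nat -> R.
Hypothesis hb : forall j, 0 <= b j.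

Lemma jensen_unif (y : nat -> R) n : (forall i, 0 <= y i) ->
  (\sum_(i < n) y i) `^ p <= n%:R `^ (p - 1) * \sum_(i < n) y i `^ p.
Proof.
move=> y0.
have := @jensen_fin R p (fun _ => 1) y n hp (fun _ => ler01) y0.
under eq_bigr do rewrite mul1r.
under [X in _ <= _ * X]eq_bigr do rewrite mul1r.
by rewrite sumr_const card_ord.
Qed.

Lemma T_le_D r : Tsum b r <= \sum_(s < r.+2) Dblk b s.
Proof.
rewrite /Dblk dyadic /Tsum big_add1 /=.
rewrite [X in _ <= X](big_cat_nat _ (n := 2 ^ r.+1)) //=; last first.
  by rewrite -ltnS prednK ?expn_gt0 // ltn_exp2l.
by rewrite lerDl sumr_ge0.
Qed.

Lemma T_mono r r' : (r <= r')%N -> Tsum b r <= Tsum b r'.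
Proof.
move=> rr; rewrite /Tsum (big_cat_nat _ (n := 2 ^ r.+1) (p := 2 ^ r'.+1)) //=.
  by rewrite lerDl sumr_ge0.
by rewrite leq_exp2l.
Qed.

Lemma blk_shift (F : nat -> R) s :
  \sum_(2 ^ s <= i < 2 ^ s.+1) F i = \sum_(i < 2 ^ s) F (i + 2 ^ s)%N.
Proof.
rewrite -{1}(add0n (2 ^ s)%N) big_addn.
have -> : (2 ^ s.+1 - 2 ^ s = 2 ^ s)%N by rewrite expnS mul2n -addnn addnK.
by rewrite big_mkord.
Qed.

Lemma D_pow s : Dblk b s `^ p <= 2 * 2 ^+ s * Wblk p b s.
Proof.
rewrite /Dblk /Wblk !blk_shift.
have J := jensen_unif (fun i => b (i + 2 ^ s)%N.-1) (2 ^ s) (fun i => hb _).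
apply: le_trans J _.
rewrite !mulr_sumr; apply: ler_sum => i _.
rewrite mulrA; apply: ler_wpM2r; first exact: powR_ge0.
set X : R := 2 ^+ s; set I : R := (i + 2 ^ s)%N%:R.
have X0 : 0 < X by rewrite exprn_gt0.
have XE : (2 ^ s)%N%:R = X by rewrite natrX.
have I0 : 0 < I by rewrite /I ltr0n addn_gt0 expn_gt0 orbT.
have XI : X <= I by rewrite /I natrD XE lerDr.
have I2X : I <= 2 * X.
  by rewrite /I natrD XE mulr2n mulrDl mul1r lerD2r -XE ler_nat ltnW.
rewrite XE.
have Ep : I * I `^ (p - 2) = I `^ (p - 1).
  have -> : p - 2 = (p - 1) - 1 by ring.
  by apply: mulr_powRB1 (ltW I0) _; rewrite subr_gt0.
have H1 : X `^ (p - 1) <= I `^ (p - 1).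
  by apply: ge0_ler_powR => //; rewrite ?nnegrE ?subr_ge0; apply: ltW.
rewrite -(ler_pM2l I0) [X in _ <= X]mulrA [I * (2 * X)]mulrC -[X in _ <= X]mulrA Ep.
rewrite mulrC [X in _ <= X]mulrC.
by apply: ler_pM => //; rewrite ?powR_ge0 // ltW.
Qed.

End Blk2.


Section Key.
Variable R : realType.
Variable p : R.
Hypothesis hp : 1 < p.
Variable b : nat -> R.
Hypothesis hb : forall j, 0 <= b j.
Variables rho tau : R.
Hypothesis hrho : 0 < rho < 1.
Hypothesis htau : 0 < tau < 1.
Hypothesis hrhop : forall s, (rho ^+ s) `^ p = (2 ^+ s)^-1.

Definition dd s := rho ^+ s * Dblk b s.
Definition zz r := rho ^+ r * \sum_(s < r.+2) Dblk b s.
Definition K1 r s := if (s <= r.+1)%N then rho^-1 * rho ^+ (r.+1 - s) else 0.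
Definition K2 k r := if (k <= r)%N then tau ^+ (r - k) else 0.
Definition VV k N := \sum_(r < N) K2 k r * zz r.
Definition A1 := rho^-1 * (1 - rho)^-1.
Definition A2 := (1 - tau)^-1.

Lemma D_ge0 s : 0 <= Dblk b s.
Proof. by apply: sumr_ge0 => i _. Qed.

Lemma W_ge0 s : 0 <= Wblk p b s.
Proof. by apply: sumr_ge0 => i _; rewrite mulr_ge0 ?powR_ge0. Qed.

Lemma rho0 : 0 < rho. Proof. by case/andP: hrho. Qed.
Lemma tau0 : 0 < tau. Proof. by case/andP: htau. Qed.
Lemma rhoge0 : 0 <= rho. Proof. exact: ltW rho0. Qed.
Lemma tauge0 : 0 <= tau. Proof. exact: ltW tau0. Qed.
Lemma rhoX0 n : 0 <= rho ^+ n. Proof. exact: exprn_ge0 rhoge0. Qed.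
Lemma tauX0 n : 0 <= tau ^+ n. Proof. exact: exprn_ge0 tauge0. Qed.

Lemma dd_ge0 s : 0 <= dd s.
Proof. by rewrite mulr_ge0 ?rhoX0 ?D_ge0. Qed.

Lemma zz_ge0 r : 0 <= zz r.
Proof.
by rewrite mulr_ge0 ?rhoX0 //; apply: sumr_ge0 => i _; exact: D_ge0.
Qed.

Lemma K1_ge0 r s : 0 <= K1 r s.
Proof. by rewrite /K1; case: ifP => // _; rewrite mulr_ge0 ?invr_ge0 ?rhoX0 ?rhoge0. Qed.

Lemma K2_ge0 k r : 0 <= K2 k r.
Proof. by rewrite /K2; case: ifP => // _; rewrite tauX0. Qed.

Lemma VV_ge0 k N : 0 <= VV k N.
Proof. by apply: sumr_ge0 => r _; rewrite mulr_ge0 ?K2_ge0 ?zz_ge0. Qed.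

Lemma VV_mono k N N' : (N <= N')%N -> VV k N <= VV k N'.
Proof.
move=> NN; rewrite /VV -!(big_mkord xpredT (fun r => K2 k r * zz r)) (big_cat_nat _ (n := N) (p := N')) //=.
by rewrite lerDl sumr_ge0 // => r _; rewrite mulr_ge0 ?K2_ge0 ?zz_ge0.
Qed.

Lemma zz_eq r L : (r.+2 <= L)%N -> zz r = \sum_(s < L) K1 r s * dd s.
Proof.
move=> rL; rewrite -(big_mkord xpredT (fun s => K1 r s * dd s)) (big_cat_nat _ (n := r.+2)) //=.
rewrite [X in _ + X]big_nat_cond [X in _ + X]big1 ?addr0; last first.
  move=> s /andP[/andP[rs _] _]; rewrite /K1 ifF ?mul0r //.
  by apply/negbTE; rewrite -ltnNge.
rewrite big_mkord /zz mulr_sumr; apply: eq_bigr => s _.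
have sr : (s <= r.+1)%N by rewrite -ltnS.
rewrite /K1 /dd sr mulrA; congr (_ * _).
rewrite -mulrA -exprD subnK // exprS mulKf //.
by rewrite gt_eqF ?rho0.
Qed.

Definition Cp := (A2 `^ (p - 1) * A2) * (A1 `^ (p - 1) * A1 * 2).

Lemma key N :
  \sum_(k < N) VV k N `^ p <= Cp * \sum_(s < N.+1) Wblk p b s.
Proof.
have r1 : 0 <= rho < 1 by case/andP: hrho => /ltW -> ->.
have t1 : 0 <= tau < 1 by case/andP: htau => /ltW -> ->.
have A20 : 0 <= A2 by rewrite invr_ge0 subr_ge0 ltW //; case/andP: htau.
have A10 : 0 <= A1.
  by rewrite mulr_ge0 ?invr_ge0 ?subr_ge0 ?rhoge0 //; case/andP: hrho => _ /ltW.
have S1 := @schur_fin R p K2 zz N N A2 A2 hp K2_ge0 zz_ge0 A20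
  (fun k _ => @geo_le2 R tau k N t1) (fun r _ => @geo_le3 R tau r N t1).
apply: le_trans S1 _.
rewrite /Cp -!mulrA; apply: ler_wpM2l; first exact: powR_ge0.
apply: ler_wpM2l => //.
have E : \sum_(r < N) zz r `^ p =
         \sum_(r < N) (\sum_(s < N.+1) K1 r s * dd s) `^ p.
  by apply: eq_bigr => r _; rewrite (@zz_eq r N.+1 (ltn_ord r)).
rewrite E.
have rowK1 r : (r < N)%N -> \sum_(s < N.+1) K1 r s <= A1.
  move=> _; rewrite /A1 /K1.
  apply: (@le_trans _ _ (rho^-1 * \sum_(s < N.+1)
     (if (s <= r.+1)%N then rho ^+ (r.+1 - s) else 0))).
    rewrite mulr_sumr; apply: ler_sum => s _; case: ifP => //; by rewrite mulr0.
  by apply: ler_wpM2l; rewrite ?invr_ge0 ?rhoge0 // geo_le3.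
have colK1 s : (s < N.+1)%N -> \sum_(r < N) K1 r s <= A1.
  move=> _; rewrite /A1 /K1.
  apply: (@le_trans _ _ (rho^-1 * \sum_(r < N.+1)
     (if (s <= r)%N then rho ^+ (r - s) else 0))).
    rewrite [X in _ <= _ * X]big_ord_recl mulrDr mulr_sumr.
    rewrite -[X in X <= _]add0r; apply: lerD.
      by rewrite mulr_ge0 ?invr_ge0 ?rhoge0 //; case: ifP => // _; exact: rhoX0.
    apply: ler_sum => i _; rewrite lift0.
    by case: ifP => _; rewrite ?mulr0.
  by apply: ler_wpM2l; rewrite ?invr_ge0 ?rhoge0 // geo_le2.
have S2 := @schur_fin R p K1 dd N N.+1 A1 A1 hp K1_ge0 dd_ge0 A10 rowK1 colK1.
apply: le_trans S2 _.
rewrite -mulrA; apply: ler_wpM2l; first exact: powR_ge0.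
rewrite [X in _ <= X]mulrA -/A1; apply: ler_wpM2l => //.
rewrite mulr_sumr; apply: ler_sum => s _.
rewrite /dd powRM ?rhoX0 ?D_ge0 // hrhop.
apply: le_trans (ler_wpM2l _ (@D_pow R p hp b hb s)) _; first by rewrite invr_ge0 exprn_ge0.
rewrite mulrA mulrCA mulVf ?mulr1 ?gt_eqF ?exprn_gt0 //.
Qed.

End Key.


Arguments VV {R}. Arguments zz {R}. Arguments K2 {R}. Arguments K1 {R}. Arguments dd {R}.
Section Term.
Variable R : realType.
Variable p : R.
Hypothesis hp : 1 < p.
Variable b : nat -> R.
Hypothesis hb : forall j, 0 <= b j.
Variables rho tau : R.
Hypothesis hrho : 0 < rho < 1.
Hypothesis htau : 0 < tau < 1.
Hypothesis htk : forall k : nat, 2 `^ (k%:R / (p / (p - 1))) * tau ^+ k = 1.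
Hypothesis hrt : rho * tau = 2^-1.

Definition tt k r := 2 `^ (k%:R / (p / (p - 1))) *
  Num.min 1 (2 `^ (r%:R - k%:R)) * (Tsum b r / 2 ^+ r).

Lemma T_ge0 r : 0 <= Tsum b r.
Proof. by apply: sumr_ge0 => i _. Qed.

Lemma term_le k r N : (k < N)%N -> (r < N)%N -> tt k r <= VV b rho tau k N.
Proof.
move=> kN rN.
set c := 2 `^ (k%:R / (p / (p - 1))).
have c0 : 0 <= c by exact: powR_ge0.
set m := maxn k r.
have mN : (m < N)%N by rewrite gtn_max kN rN.
have km : (k <= m)%N by rewrite leq_maxl.
have two0 : (0 : R) < 2 ^+ r by rewrite exprn_gt0.
have S1 : tt k r <= c * (Tsum b m / 2 ^+ m).
  rewrite /tt -/c -mulrA; apply: ler_wpM2l => //.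
  case: (leqP k r) => kr.
    have -> : m = r by apply/maxn_idPr.
    rewrite -[X in _ <= X]mul1r; apply: ler_wpM2r.
      by rewrite divr_ge0 ?T_ge0 // ltW.
    by rewrite ge_min lexx.
  have -> : m = k by apply/maxn_idPl/ltnW.
  have E : 2 `^ (r%:R - k%:R) = 2 ^+ r / 2 ^+ k :> R.
    rewrite powRB; last by apply/implyP => _; rewrite pnatr_eq0.
    by rewrite !powR_mulrn.
  apply: (@le_trans _ _ (2 ^+ r / 2 ^+ k * (Tsum b r / 2 ^+ r))).
    apply: ler_wpM2r; first by rewrite divr_ge0 ?T_ge0 // ltW.
    by rewrite -E ge_min lexx orbT.
  have -> : 2 ^+ r / 2 ^+ k * (Tsum b r / 2 ^+ r) = Tsum b r / 2 ^+ k :> R.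
    by field; rewrite ?expf_neq0 ?pnatr_eq0.
  apply: ler_wpM2r; first by rewrite invr_ge0 exprn_ge0.
  by apply: T_mono => //; apply: ltnW.
apply: le_trans S1 _.
have S2 : Tsum b m / 2 ^+ m <= tau ^+ m * zz b rho m.
  rewrite /zz mulrA -exprMn [tau * rho]mulrC hrt exprVn [X in _ <= X]mulrC.
  apply: ler_wpM2r; first by rewrite invr_ge0 exprn_ge0.
  exact: T_le_D.
apply: le_trans (ler_wpM2l c0 S2) _.
have S3 : c * (tau ^+ m * zz b rho m) = K2 tau k m * zz b rho m.
  rewrite /K2 km mulrA; congr (_ * _).
  by rewrite -(subnK km) exprD mulrC -mulrA [tau ^+ k * c]mulrC htk mulr1 subnK.
rewrite S3 /VV (bigD1 (Ordinal mN)) //= lerDl.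
apply: sumr_ge0 => i _; apply: mulr_ge0.
  exact: (@K2_ge0 R tau htau).
exact: (@zz_ge0 R b hb rho hrho).
Qed.

End Term.


Section Consts.
Variable R : realType.
Variable p : R.
Hypothesis hp : 1 < p.

Lemma two_ne0 : (2 : R) != 0. Proof. by rewrite pnatr_eq0. Qed.

Lemma pow2X (x : R) n : (2 `^ x) ^+ n = 2 `^ (x * n%:R).
Proof. by rewrite powRrM powR_mulrn // powR_ge0. Qed.

Lemma pow2N (y : R) : 2 `^ (- y) = (2 `^ y)^-1.
Proof.
have h : 2 `^ y * 2 `^ (- y) = 1 :> R.
  rewrite -powRD ?subrr ?powRr0 //; by apply/implyP => _; exact: two_ne0.
have y0 : 2 `^ y != 0 :> R by rewrite gt_eqF // powR_gt0.
by apply: (mulfI y0); rewrite h mulfV.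
Qed.

Lemma pow2_lt1 (x : R) : x < 0 -> 0 < 2 `^ x < 1.
Proof.
move=> x0; rewrite powR_gt0 //=.
rewrite lt_neqAle powR_eq1 negb_or pnatr_eq1 /= negb_or.
rewrite ltNge ler0n /= lt_eqF //=.
apply: (@le_trans _ _ (2 `^ 0)); last by rewrite powRr0.
by apply: ler_powR; rewrite ?ler1n // ltW.
Qed.

Definition rho0c := 2 `^ (- p^-1) : R.
Definition tau0c := 2 `^ (p^-1 - 1) : R.

Lemma p0 : 0 < p. Proof. exact: lt_trans hp. Qed.

Lemma rho0c_bd : 0 < rho0c < 1.
Proof. by apply: pow2_lt1; rewrite oppr_lt0 invr_gt0 p0. Qed.

Lemma tau0c_bd : 0 < tau0c < 1.
Proof. by apply: pow2_lt1; rewrite subr_lt0 invf_lt1 ?p0. Qed.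

Lemma rho0c_p s : (rho0c ^+ s) `^ p = (2 ^+ s)^-1.
Proof.
rewrite /rho0c pow2X -powRrM.
have -> : - p^-1 * s%:R * p = - s%:R.
  by field; rewrite gt_eqF // p0.
by rewrite pow2N powR_mulrn.
Qed.

Lemma tau0c_k (k : nat) : 2 `^ (k%:R / (p / (p - 1))) * tau0c ^+ k = 1.
Proof.
rewrite /tau0c pow2X -powRD; last by apply/implyP => _; exact: two_ne0.
have -> : k%:R / (p / (p - 1)) + (p^-1 - 1) * k%:R = 0.
  have pm1 : p - 1 != 0 by rewrite subr_eq0 gt_eqF.
  by field; rewrite pm1 gt_eqF ?p0.
by rewrite powRr0.
Qed.

Lemma rt0c : rho0c * tau0c = 2^-1.
Proof.
rewrite /rho0c /tau0c -powRD; last by apply/implyP => _; exact: two_ne0.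
by rewrite addrA addNr add0r powR_inv1.
Qed.

End Consts.


Section Ahat.
Variable R : realType.
Variable a : int -> R[i].

Definition beta j := cabs (a (Posz j)) + cabs (a (- Posz j)).

Lemma cabs_ge0 (z : R[i]) : 0 <= cabs z.
Proof. by case: z => x y; rewrite /cabs /= sqrtr_ge0. Qed.

Lemma beta_ge0 j : 0 <= beta j.
Proof. by rewrite addr_ge0 ?cabs_ge0. Qed.

Lemma cabs_sum (F : nat -> R[i]) m n :
  cabs (\sum_(m <= j < n) F j) <= \sum_(m <= j < n) cabs (F j).
Proof.
elim/big_ind2: _ => //.
- by rewrite /cabs /= expr0n /= addr0 sqrtr0.
- move=> x1 x2 y1 y2 h1 h2; apply: le_trans _ (lerD h1 h2).
  exact: le_normcD.
Qed.

Lemma sum_prefix n N : (n <= N)%N ->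
  \sum_(0 <= j < n) beta j <= \sum_(0 <= j < N) beta j.
Proof.
move=> nN; rewrite [X in _ <= X](big_cat_nat _ (n := n)) //= lerDl.
by apply: sumr_ge0 => j _; exact: beta_ge0.
Qed.

Lemma psum_le m r : (2 ^ r <= `|m|)%N -> (`|m| < 2 ^ r.+1)%N ->
  cabs (psum a m) <= Tsum beta r.
Proof.
case: m => n /= h1 h2.
  apply: le_trans (cabs_sum _ _ _) _.
  apply: (@le_trans _ _ (\sum_(0 <= j < n.+1) beta j)).
    by apply: ler_sum => j _; rewrite lerDl cabs_ge0.
  exact: sum_prefix.
apply: le_trans (cabs_sum _ _ _) _.
apply: (@le_trans _ _ (\sum_(0 <= j < n.+2) beta j)).
  by apply: ler_sum => j _; rewrite lerDr cabs_ge0.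
exact: sum_prefix.
Qed.

Lemma ahat_le r : (ahat a r <= ((Tsum beta r) / 2 ^+ r)%:E)%E.
Proof.
apply: ge_ereal_sup => _ [m /andP[h1 h2] <-]; rewrite lee_fin.
have T0 : 0 <= Tsum beta r by apply: sumr_ge0 => j _; exact: beta_ge0.
have d0 : (0 : R) < 2 ^+ r by rewrite exprn_gt0.
have dle : (2 ^+ r : R) <= (`|m|%N)%:R + 1.
  apply: (@le_trans _ _ (`|m|%N)%:R); last by rewrite lerDl.
  by rewrite -natrX ler_nat.
apply: (@le_trans _ _ (Tsum beta r / ((`|m|%N)%:R + 1))).
  apply: ler_wpM2r; first by rewrite invr_ge0 (le_trans (ltW d0)).
  exact: psum_le.
apply: ler_wpM2l => //.
by rewrite lef_pV2 // posrE (lt_le_trans d0).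
Qed.

Lemma ahat_ge0 r : (0 <= ahat a r)%E.
Proof.
apply: (@le_trans _ _ ((cabs (psum a (Posz (2 ^ r)))) / ((`|Posz (2 ^ r)|%N)%:R + 1))%:E).
  by rewrite lee_fin divr_ge0 ?cabs_ge0 // addr_ge0.
apply: ereal_sup_ubound; exists (Posz (2 ^ r)) => //=.
by rewrite leqnn /= ltn_exp2l.
Qed.

End Ahat.


Section Sup.
Variable R : realType.
Local Open Scope ereal_scope.

Lemma supsum (Y : nat -> \bar R) (h : nat -> nat -> R) :
  (forall k, 0 <= Y k) -> (forall k n, (0 <= h k n)%R) ->
  (forall k n n', (n <= n')%N -> (h k n <= h k n')%R) ->
  (forall k c, (forall n, (h k n <= c)%R) -> Y k <= c%:E) ->
  forall K M, (forall n, (\sum_(k < K) h k n <= M)%R) ->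
  \sum_(k < K) Y k <= M%:E.
Proof.
move=> Y0 h0 hmono HY; elim => [|K IH] M HM.
  by rewrite big_ord0 lee_fin; have := HM 0%N; rewrite big_ord0.
rewrite big_ord_recr /=.
set S := \sum_(k < K) Y k.
have H1 n0 : S <= (M - h K n0)%:E.
  apply: IH => n; set n1 := maxn n n0.
  have := HM n1; rewrite big_ord_recr /= => H.
  apply: (@le_trans _ _ (\sum_(k < K) h k n1)%R).
    by apply: ler_sum => k _; apply: hmono; rewrite leq_maxl.
  rewrite lerBrDr; apply: le_trans H; apply: lerD => //.
  by apply: hmono; rewrite leq_maxr.
have S0 : 0 <= S by apply: sume_ge0 => k _.
have Sfin : S \is a fin_num.
  by rewrite ge0_fin_numE // (le_lt_trans (H1 0%N)) // ltey.
rewrite -(fineK Sfin).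
have : Y K <= (M - fine S)%:E.
  apply: HY => n; have := H1 n; rewrite -(fineK Sfin) lee_fin.
  by rewrite lerBrDr addrC -lerBrDr.
move=> HYK; apply: le_trans (leeD (lexx _) HYK) _.
by rewrite -EFinD addrC subrK.
Qed.

Lemma nneseries_ub (f : nat -> \bar R) (M : \bar R) :
  (forall n, 0 <= f n) -> (forall n, \sum_(0 <= k < n) f k <= M) ->
  \sum_(0 <= k <oo) f k <= M.
Proof.
move=> f0 HM.
have := @ereal_nondecreasing_series R f xpredT 0%N (fun n _ _ => f0 n).
move/ereal_nondecreasing_cvgn/cvg_lim => -> //.
by apply: ge_ereal_sup => _ [n _ <-].
Qed.

Lemma esum_partial (G : int -> R) (h : nat -> int) n :
  injective h -> (forall x, (0 <= G x)%R) ->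
  ((\sum_(0 <= j < n) G (h j))%R)%:E <= \esum_(x in [set: int]) (G x)%:E.
Proof.
move=> hinj G0; apply: esum_ge.
exists (h @` `I_n)%classic.
  split; first exact/finite_image/finite_II.
  by [].
rewrite fsbig_image; last by move=> x y _ _; exact: hinj.
rewrite -fsbig_ord big_mkord sumEFin.
by [].
Qed.

End Sup.


Arguments beta {R}.
Section Wb.
Variable R : realType.
Variable p : R.
Hypothesis hp : 1 < p.
Variable a : int -> R[i].

Definition GG (k : int) : R := (((`|k|%N)%:R + 1) `^ (p - 2)) * (cabs (a k)) `^ p.

Lemma two_pow (x y : R) : 0 <= x -> 0 <= y ->
  (x + y) `^ p <= 2 `^ (p - 1) * (x `^ p + y `^ p).
Proof.
move=> x0 y0.
have yy : forall i, 0 <= (fun i => if i == 0%N then x else y) i.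
  by move=> i /=; case: (i == 0%N).
have := @jensen_unif R p hp (fun i => if i == 0%N then x else y) 2 yy.
by rewrite !big_ord_recr !big_ord0 /= !add0r.
Qed.

Lemma W_bound N e : (\esum_(k in [set: int]) (GG k)%:E = e%:E)%E ->
  \sum_(s < N.+1) Wblk p (beta a) s <= 2 `^ (p - 1) * (e + e).
Proof.
move=> He.
have G0 k : 0 <= GG k by rewrite mulr_ge0 ?powR_ge0.
rewrite /Wblk (@dyadic R (fun i => i%:R `^ (p - 2) * beta a i.-1 `^ p)) big_add1 /=.
set n := (2 ^ N.+1).-1.
apply: (@le_trans _ _ (\sum_(0 <= j < n) 2 `^ (p - 1) * (GG (Posz j) + GG (- Posz j)))).
  apply: ler_sum => j _.
  rewrite /GG abszN /= natr1 -mulrDr mulrCA.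
  apply: ler_wpM2l; first exact: powR_ge0.
  by apply: two_pow; exact: cabs_ge0.
rewrite -mulr_sumr big_split /=; apply: ler_wpM2l; first exact: powR_ge0.
have P1 := @esum_partial R GG (fun j => Posz j) n ltac:(by move=> x y []) G0.
have P2 := @esum_partial R GG (fun j => - Posz j) n
  ltac:(by move=> x y /oppr_inj []) G0.
rewrite He lee_fin in P1; rewrite He lee_fin in P2.
exact: lerD.
Qed.

End Wb.


Theorem mainTheorem11 (R : realType) (p : R) (hp1 : 1 < p) :
  exists C : R, 0 < C /\
    forall a : int -> R[i], (Ap p a <= C%:E * RHSp p a)%E.
Proof.
set rho := rho0c R p; set tau := tau0c R p.
have hrho : 0 < rho < 1 := @rho0c_bd R p hp1.
have htau : 0 < tau < 1 := @tau0c_bd R p hp1.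
have pp0 : 0 < p by apply: lt_trans hp1.
have Cp0 : 0 < Cp R p rho tau.
  have A20 : 0 < A2 R tau by rewrite /A2 invr_gt0 subr_gt0; case/andP: htau.
  have A10 : 0 < A1 R rho.
    by rewrite /A1 mulr_gt0 // invr_gt0 ?subr_gt0; case/andP: hrho.
  rewrite /Cp; apply: mulr_gt0; first by apply: mulr_gt0 => //; exact: powR_gt0.
  by apply: mulr_gt0 => //; apply: mulr_gt0 => //; exact: powR_gt0.
set M0 := Cp R p rho tau * (2 `^ (p - 1) * 2).
have M00 : 0 < M0 by apply: mulr_gt0 => //; apply: mulr_gt0 => //; exact: powR_gt0.
exists (M0 `^ p^-1); split; first exact: powR_gt0.
move=> a.
set b := beta a.
have hb : forall j, 0 <= b j := @beta_ge0 R a.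
rewrite /RHSp.
set E := (\esum_(k in _) _)%E.
have HE : E = (\esum_(k in [set: int]) (GG R p a k)%:E)%E by [].
have E0 : (0 <= E)%E by apply: esum_ge0 => k _; rewrite lee_fin mulr_ge0 ?powR_ge0.
have [Einf|Efin] := eqVneq E +oo%E.
  rewrite Einf poweRyr ?invr_eq0 ?gt_eqF // mulry gtr0_sg ?mul1e ?leey //.
  exact: powR_gt0.
have Efin' : E \is a fin_num by rewrite ge0_fin_numE // lt_neqAle Efin leey.
set e := fine E.
have HEe : E = e%:E by rewrite fineK.
have e0 : 0 <= e by rewrite -lee_fin -HEe.
have keyN N : \sum_(k < N) VV b rho tau k N `^ p <= M0 * e.
  apply: le_trans (@key R p hp1 b hb rho tau hrho htau (@rho0c_p R p hp1) N) _.
  apply: le_trans (ler_wpM2l (ltW Cp0) (@W_bound R p hp1 a N e (etrans (esym HE) HEe))) _.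
  by rewrite /M0 le_eqVlt; apply/orP; left; apply/eqP; ring.
rewrite HEe poweR_EFin -EFinM -powRM ?(ltW M00) // -poweR_EFin.
rewrite /Ap /=.
set X := fun k : nat => ((2 `^ (k%:R / (p / (p - 1))))%:E *
        ereal_sup (R:=R)
          [set (Num.min 1 (2 `^ (r%:R - k%:R)))%:E * ahat (R:=R) a r
             | r in [set: nat]])%E.
have X0 k : (0 <= X k)%E.
  apply: mule_ge0; first by rewrite lee_fin powR_ge0.
  apply: (@le_trans _ _ ((Num.min 1 (2 `^ (0%:R - k%:R)))%:E * ahat a 0)%E).
    apply: mule_ge0; last exact: ahat_ge0.
    by rewrite lee_fin le_min ler01 powR_ge0.
  by apply: ereal_sup_ubound; exists 0%N.
have HY k c : (forall n, VV b rho tau k n `^ p <= c) -> (X k `^ p <= c%:E)%E.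
  move=> Hc.
  have c0 : 0 <= c by apply: le_trans (Hc 0%N); exact: powR_ge0.
  set bnd := c `^ p^-1.
  have Vb n : VV b rho tau k n <= bnd.
    have V0 := @VV_ge0 R b hb rho tau hrho htau k n.
    rewrite -[X in X <= _](@powRr1 _ (VV b rho tau k n)) //.
    rewrite -(mulfV (negbT (gt_eqF pp0))) powRrM /bnd.
    by apply: ge0_ler_powR; rewrite ?nnegrE ?invr_ge0 ?powR_ge0 ?(ltW pp0) ?Hc.
  set c0k := 2 `^ (k%:R / (p / (p - 1))).
  have c0k0 : 0 < c0k by apply: powR_gt0.
  have Xle : (X k <= bnd%:E)%E.
    have sup_le : (ereal_sup [set (Num.min 1 (2 `^ (r%:R - k%:R)))%:E * ahat (R:=R) a r
             | r in [set: nat]] <= (bnd / c0k)%:E)%E.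
      apply: ge_ereal_sup => _ [r _ <-].
      have m0 : (0 <= (Num.min 1 ((2 : R) `^ (r%:R - k%:R)))%:E)%E.
        by rewrite lee_fin le_min ler01 powR_ge0.
      apply: le_trans (lee_wpmul2l m0 (@ahat_le R a r)) _.
      rewrite -EFinM lee_fin ler_pdivlMr // mulrC mulrA.
      have := @term_le R p b hb rho tau hrho htau (@tau0c_k R p hp1) (@rt0c R p)
        k r (maxn k r).+1 ltac:(by rewrite ltnS leq_maxl) ltac:(by rewrite ltnS leq_maxr).
      rewrite /tt -/c0k => H; apply: le_trans H _; exact: Vb.
    have c0kE : (0 <= c0k%:E)%E by rewrite lee_fin ltW.
    apply: le_trans (lee_wpmul2l c0kE sup_le) _.
    by rewrite -EFinM lee_fin mulrCA mulfV ?gt_eqF // mulr1.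
  have -> : c = bnd `^ p.
    by rewrite /bnd -powRrM mulVf ?gt_eqF // powRr1.
  rewrite -poweR_EFin; apply: gt0_ler_poweR; rewrite ?(ltW pp0) //.
  - by rewrite in_itv /= X0 leey.
  - by rewrite in_itv /= lee_fin powR_ge0 leey.
have Hser : (\sum_(0 <= k <oo) (X k) `^ p <= (M0 * e)%:E)%E.
  apply: nneseries_ub => [k|K]; first exact: poweR_ge0.
  rewrite big_mkord.
  apply: (@supsum R (fun k => X k `^ p)%E (fun k n => VV b rho tau k n `^ p)).
  - by move=> k; exact: poweR_ge0.
  - by move=> k n; exact: powR_ge0.
  - move=> k n n' nn; apply: ge0_ler_powR; rewrite ?nnegrE ?(ltW pp0) //.
    + exact: (@VV_ge0 R b hb rho tau hrho htau).
    + exact: (@VV_ge0 R b hb rho tau hrho htau).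
    + exact: (@VV_mono R b hb rho tau hrho htau).
  - exact: HY.
  move=> n; set N := maxn K n.
  apply: (@le_trans _ _ (\sum_(k < K) VV b rho tau k N `^ p)).
    apply: ler_sum => k _; apply: ge0_ler_powR; rewrite ?nnegrE ?(ltW pp0) //.
    + exact: (@VV_ge0 R b hb rho tau hrho htau).
    + exact: (@VV_ge0 R b hb rho tau hrho htau).
    + by apply: (@VV_mono R b hb rho tau hrho htau); rewrite leq_maxr.
  apply: le_trans (keyN N).
  rewrite -!(big_mkord xpredT (fun k => VV b rho tau k N `^ p)).
  rewrite [X in _ <= X](big_cat_nat _ (n := K)) //= ?leq_maxl // lerDl.
  by apply: sumr_ge0 => k _; exact: powR_ge0.
rewrite -(poweR_EFin (M0 * e)).
apply: gt0_ler_poweR => //.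
- by rewrite invr_ge0 ltW.
- by rewrite in_itv /= leey andbT; apply: nneseries_ge0 => k _ _; exact: poweR_ge0.
- by rewrite in_itv /= leey andbT lee_fin mulr_ge0 // ltW.
Qed.
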